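(* Let $n\ge 2$ be an integer, let $a_1,\dots,a_n>0$ with $\sum_{k=1}^n a_k=1$, and let $c_k,d_k,\beta_k\in\mathbb{R}$ ($k=1,\dots,n$) with $\max_{1\le k\le n}|d_k|<1$. Put $\alpha_1=0$, $\alpha_k=\sum_{j=1}^{k-1}a_j$ for $k=2,\dots,n+1$, and $S_k(x)=a_kx+\alpha_k$. Let $f\in C[0;1]$ be a continuous function satisfying $f=G(f)$, where $$[G(f)](t)=\sum_{k=1}^n\bigl(d_k f(S_k^{-1}(t))+c_k t+\beta_k\bigr)\chi_{I_k}(t),\qquad I_1=[0;\alpha_2],\ I_k=(\alpha_k;\alpha_{k+1}]\ (k\ge2).$$ Suppose there is an index $i$ with $|d_i|>a_i$. Then for every $\alpha\in(0;1]$ satisfying $$\alpha\le\min_{1\le j\le n}\frac{\ln|d_j|}{\ln a_j}$$ there exists a constant $C\ge0$ such that $|f(x)-f(y)|\le C|x-y|^{\alpha}$ for all $x,y\in[0;1]$ (i.e. $f$ satisfies the Hölder condition with exponent $\alpha$).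
   Context: Here $\chi_I$ is the indicator function of the interval $I$. A continuous function $f$ with $G(f)=f$ is called an (affine) self-similar function with self-similarity parameters $\{a_k\},\{c_k\},\{d_k\},\{\beta_k\}$. Convention: if $d_j=0$, then $\ln|d_j|=-\infty$ and the ratio $\ln|d_j|/\ln a_j$ is interpreted as $+\infty$. A function $f$ on $[0;1]$ satisfies the Hölder condition with exponent $\alpha\in(0;1]$ if $\sup_{x\ne y}|f(x)-f(y)|/|x-y|^\alpha<\infty$. *)

(* Defs.v *)
(* concrete reals R. Indices k range over 1..n (nat). *)
From Stdlib Require Import Reals Lra.
Open Scope R_scope.

Fixpoint sum1 (n : nat) (F : nat -> R) : R :=
  match n with
  | O => 0
  | S m => sum1 m F + F (S m)
  end.

Definition alph (a : nat -> R) (k : nat) : R := sum1 (k - 1) a.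

Definition Smap (a : nat -> R) (k : nat) (x : R) : R := a k * x + alph a k.
Definition Sinv (a : nat -> R) (k : nat) (t : R) : R := (t - alph a k) / a k.

Definition chiI (a : nat -> R) (k : nat) (t : R) : R :=
  if Nat.eqb k 1 then
    (if Rle_dec 0 t then (if Rle_dec t (alph a 2) then 1 else 0) else 0)
  else
    (if Rlt_dec (alph a k) t then (if Rle_dec t (alph a (S k)) then 1 else 0) else 0).

Definition Gop (n : nat) (a c d beta : nat -> R) (f : R -> R) (t : R) : R :=
  sum1 n (fun k => (d k * f (Sinv a k t) + c k * t + beta k) * chiI a k t).

Definition cont01 (f : R -> R) : Prop :=
  forall x, 0 <= x <= 1 -> forall eps, 0 < eps ->
    exists delta, 0 < delta /\
      forall y, 0 <= y <= 1 -> Rabs (y - x) < delta -> Rabs (f y - f x) < eps.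

(* Main.v *)
Require Import Defs.
From Stdlib Require Import Reals Lra Lia.
Open Scope R_scope.

Lemma exp_le' x y : x <= y -> exp x <= exp y.
Proof. intros [H|H]. left; now apply exp_increasing. right; now subst. Qed.

Lemma ln_le' x y : 0 < x -> x <= y -> ln x <= ln y.
Proof. intros Hx [H|H]. left; now apply ln_increasing. right; now subst. Qed.

Lemma Rpow_pos h al : 0 < Rpower h al.
Proof. unfold Rpower; apply exp_pos. Qed.

Lemma Rpow_ge_self h al : 0 < h <= 1 -> 0 < al <= 1 -> h <= Rpower h al.
Proof.
  intros [H0 H1] [A0 A1]. unfold Rpower.
  assert (ln h <= 0) by (rewrite <- ln_1; now apply ln_le').
  rewrite <- (exp_ln h) at 1 by lra. apply exp_le'. nra.
Qed.

Lemma Rpow_mono u v al : 0 < u <= v -> 0 <= al -> Rpower u al <= Rpower v al.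
Proof.
  intros [H0 H1] A. unfold Rpower. apply exp_le'.
  apply Rmult_le_compat_l; auto. now apply ln_le'.
Qed.

Lemma Rpow_div h a al : 0 < h -> 0 < a -> Rpower (h / a) al = Rpower h al / Rpower a al.
Proof.
  intros. unfold Rpower, Rdiv. rewrite ln_mult, ln_Rinv by (auto; apply Rinv_0_lt_compat; auto).
  replace (al * (ln h + - ln a)) with (al * ln h + - (al * ln a)) by ring.
  rewrite exp_plus, exp_Ropp. reflexivity.
Qed.

Lemma Rpow_1 a : 0 < a -> Rpower a 1 = a.
Proof. intros; unfold Rpower; rewrite Rmult_1_l; now apply exp_ln. Qed.

Lemma Rpow_plus a x y : Rpower a (x + y) = Rpower a x * Rpower a y.
Proof. unfold Rpower. rewrite Rmult_plus_distr_r. apply exp_plus. Qed.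

Lemma Rpow_lt1 a x : 0 < a < 1 -> 0 < x -> Rpower a x < 1.
Proof.
  intros [H0 H1] Hx. unfold Rpower. rewrite <- exp_0. apply exp_increasing.
  assert (ln a < 0) by (rewrite <- ln_1; now apply ln_increasing). nra.
Qed.

Lemma fin_max (n : nat) (g : nat -> R) : exists B, forall k, (1 <= k <= n)%nat -> g k <= B.
Proof.
  induction n as [|n [B HB]].
  - exists 0. intros; lia.
  - exists (Rmax B (g (S n))). intros k Hk.
    destruct (Nat.eq_dec k (S n)) as [->|Hne]. apply Rmax_r.
    eapply Rle_trans; [apply HB; lia | apply Rmax_l].
Qed.

Lemma fin_max_lt (n : nat) (g : nat -> R) u : (forall k, (1 <= k <= n)%nat -> g k < u) ->
  exists B, B < u /\ forall k, (1 <= k <= n)%nat -> g k <= B.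
Proof.
  induction n as [|n IH]; intros Hg.
  - exists (u - 1). split. lra. intros; lia.
  - destruct IH as [B [HBu HB]]. intros; apply Hg; lia.
    exists (Rmax B (g (S n))). split. apply Rmax_lub_lt; auto. apply Hg; lia.
    intros k Hk.
    destruct (Nat.eq_dec k (S n)) as [->|Hne]. apply Rmax_r.
    eapply Rle_trans; [apply HB; lia | apply Rmax_l].
Qed.

Lemma fin_min_gt (n : nat) (g : nat -> R) u : (forall k, (1 <= k <= n)%nat -> u < g k) ->
  exists B, u < B /\ forall k, (1 <= k <= n)%nat -> B <= g k.
Proof.
  intros H. destruct (fin_max_lt n (fun k => - g k) (- u)) as [B [H1 H2]].
  intros k Hk; specialize (H k Hk); lra.
  exists (- B). split. lra. intros k Hk; specialize (H2 k Hk); simpl in H2; lra.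
Qed.

Lemma scale_ind (H : R -> Prop) h0 r : 0 < r < 1 -> 0 < h0 ->
  (forall h, h0 <= h -> H h) ->
  (forall h, 0 < h -> h < h0 -> (forall h', h / r <= h' -> H h') -> H h) ->
  forall h, 0 < h -> H h.
Proof.
  intros Hr Hh0 Hb Hs.
  assert (Hm : forall m, forall h, h0 * r ^ m <= h -> H h).
  { induction m as [|m IH]; intros h Hh.
    - apply Hb. simpl in Hh; lra.
    - destruct (Rle_lt_dec h0 h) as [Hle|Hlt]. now apply Hb.
      assert (0 < r ^ m) by (apply pow_lt; lra).
      apply Hs; auto. simpl in Hh. assert (0 < h0 * (r * r ^ m)) by (apply Rmult_lt_0_compat; nra). lra.
      intros h' Hh'. apply IH.
      apply Rle_trans with (h / r); auto.
      apply Rmult_le_reg_r with r. lra.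
      replace (h / r * r) with h by (field; lra). simpl in Hh. lra. }
  intros h Hh.
  destruct (pow_lt_1_zero r) with (y := h / h0) as [N HN].
  rewrite Rabs_right; lra. apply Rdiv_lt_0_compat; lra.
  specialize (HN N (le_n N)). rewrite Rabs_right in HN.
  apply (Hm N). apply Rmult_lt_compat_l with (r := h0) in HN; auto.
  replace (h0 * (h / h0)) with h in HN by (field; lra). lra.
  apply Rle_ge, pow_le; lra.
Qed.

Lemma sum1_zero n F : (forall j, (1 <= j <= n)%nat -> F j = 0) -> sum1 n F = 0.
Proof.
  induction n; intros H; simpl. reflexivity.
  rewrite IHn. rewrite H by lia. ring. intros; apply H; lia.
Qed.

Lemma sum1_single n F k : (1 <= k <= n)%nat -> (forall j, (1 <= j <= n)%nat -> j <> k -> F j = 0) ->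
  sum1 n F = F k.
Proof.
  induction n; intros Hk H. lia. simpl.
  destruct (Nat.eq_dec k (S n)) as [->|Hne].
  - rewrite sum1_zero. ring. intros; apply H; lia.
  - rewrite IHn by (try lia; intros; apply H; lia). rewrite (H (S n)) by lia. ring.
Qed.

Lemma bounded01 f : cont01 f -> exists M, forall t, 0 <= t <= 1 -> Rabs (f t) <= M.
Proof.
  intros Hc. set (g := fun x => f (Rmax 0 (Rmin 1 x))).
  assert (Hg : forall c, 0 <= c <= 1 -> continuity_pt g c).
  { intros c Hc01 eps Heps.
    destruct (Hc c Hc01 eps Heps) as [del [Hd Hd2]].
    exists del. split; auto. intros x [_ Hx]. simpl in *. unfold R_dist in *.
    unfold g. assert (E: Rmax 0 (Rmin 1 c) = c).
    { rewrite Rmin_right by lra. rewrite Rmax_right by lra. auto. }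
    rewrite E. apply Hd2.
    split. apply Rmax_l. apply Rmax_lub. lra. apply Rmin_l.
    unfold Rmax, Rmin; repeat destruct Rle_dec; repeat destruct Rlt_dec;
      apply Rabs_def2 in Hx; apply Rabs_def1; lra. }
  destruct (continuity_ab_maj g 0 1) as [M1 [HM1 _]]; [lra|auto|].
  destruct (continuity_ab_min g 0 1) as [M2 [HM2 _]]; [lra|auto|].
  exists (Rmax (Rabs (g M1)) (Rabs (g M2))). intros t Ht.
  specialize (HM1 t Ht). specialize (HM2 t Ht).
  assert (E : g t = f t). { unfold g. rewrite Rmin_right by lra. rewrite Rmax_right by lra. auto. }
  rewrite <- E.
  pose proof (Rle_abs (g M1)). pose proof (Rle_abs (- g M2)). rewrite Rabs_Ropp in *.
  pose proof (Rmax_l (Rabs (g M1)) (Rabs (g M2))). pose proof (Rmax_r (Rabs (g M1)) (Rabs (g M2))).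
  unfold Rabs at 1; destruct Rcase_abs; lra.
Qed.

Lemma alph_1 a : alph a 1 = 0.
Proof. reflexivity. Qed.

Lemma alph_S a k : (1 <= k)%nat -> alph a (S k) = alph a k + a k.
Proof.
  intros Hk. unfold alph. destruct k as [|k]. lia.
  replace (S (S k) - 1)%nat with (S k) by lia. replace (S k - 1)%nat with k by lia.
  reflexivity.
Qed.

Lemma alph_top a n : alph a (S n) = sum1 n a.
Proof. unfold alph. now replace (S n - 1)%nat with n by lia. Qed.

Lemma alph_mono n a : (forall k, (1 <= k <= n)%nat -> 0 < a k) ->
  forall j m, (1 <= j)%nat -> (j + m <= S n)%nat -> alph a j <= alph a (j + m).
Proof.
  intros Ha j m Hj. induction m; intros Hm.
  - rewrite Nat.add_0_r; lra.
  - replace (j + S m)%nat with (S (j + m)) by lia. rewrite alph_S by lia.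
    specialize (IHm ltac:(lia)). specialize (Ha (j + m)%nat ltac:(lia)). lra.
Qed.

Lemma alph_le n a : (forall k, (1 <= k <= n)%nat -> 0 < a k) ->
  forall j k, (1 <= j)%nat -> (j <= k <= S n)%nat -> alph a j <= alph a k.
Proof.
  intros Ha j k Hj Hk. replace k with (j + (k - j))%nat by lia.
  apply (alph_mono n); auto; lia.
Qed.

Lemma alph_gap n a : (forall k, (1 <= k <= n)%nat -> 0 < a k) ->
  forall j k, (1 <= j)%nat -> (j < k <= S n)%nat -> alph a j + a j <= alph a k.
Proof.
  intros Ha j k Hj Hk. rewrite <- alph_S by lia. apply (alph_le n); auto; lia.
Qed.

Lemma alph_nonneg n a : (forall k, (1 <= k <= n)%nat -> 0 < a k) ->
  forall k, (1 <= k <= S n)%nat -> 0 <= alph a k.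
Proof. intros Ha k Hk. rewrite <- (alph_1 a). apply (alph_le n); auto; lia. Qed.

Lemma cell n a c d beta f k t :
  (forall k, (1 <= k <= n)%nat -> 0 < a k) -> sum1 n a = 1 ->
  (forall t, 0 <= t <= 1 -> f t = Gop n a c d beta f t) ->
  (1 <= k <= n)%nat -> (alph a k < t \/ (k = 1%nat /\ 0 <= t)) -> t <= alph a (S k) ->
  f t = d k * f (Sinv a k t) + c k * t + beta k.
Proof.
  intros Ha Hs HG Hk Ht1 Ht2.
  assert (H0k : 0 <= alph a k) by (apply (alph_nonneg n); auto; lia).
  assert (Htop : alph a (S k) <= 1).
  { rewrite <- Hs, <- alph_top. apply (alph_le n); auto; lia. }
  rewrite HG by (split; lra). unfold Gop.
  rewrite (sum1_single n _ k); auto.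
  - assert (chiI a k t = 1) as ->.
    { unfold chiI. destruct (Nat.eqb_spec k 1) as [->|Hne].
      + destruct Ht1 as [Ht1|[_ Ht1]]; rewrite ?alph_1 in *;
        destruct (Rle_dec 0 t); destruct (Rle_dec t (alph a 2)); try lra.
      + destruct Ht1 as [Ht1|[? _]]; [|lia].
        destruct (Rlt_dec (alph a k) t); destruct (Rle_dec t (alph a (S k))); lra. }
    ring.
  - intros j Hj Hjk. assert (chiI a j t = 0) as ->; [|ring].
    unfold chiI. destruct (Nat.lt_ge_cases j k) as [Hlt|Hge].
    + destruct Ht1 as [Ht1|[? _]]; [|lia].
      assert (alph a (S j) <= alph a k) by (apply (alph_le n); auto; lia).
      destruct (Nat.eqb_spec j 1) as [->|Hne].
      * destruct (Rle_dec 0 t); destruct (Rle_dec t (alph a 2)); try lra.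
      * destruct (Rlt_dec (alph a j) t); destruct (Rle_dec t (alph a (S j))); lra.
    + assert (alph a (S k) <= alph a j) by (apply (alph_le n); auto; lia).
      destruct (Nat.eqb_spec j 1) as [->|Hne]. lia.
      destruct (Rlt_dec (alph a j) t); destruct (Rle_dec t (alph a (S j))); lra.
Qed.
Lemma key al a d c th C E h X : 0 < al < 1 -> 0 < a < 1 -> Rabs d <= Rpower a al ->
  (Rabs d <= a -> Rabs d <= th * Rpower a al) ->
  (a < Rabs d -> Rabs c <= E * (Rabs d / a - 1)) ->
  0 <= C -> 0 <= E -> Rabs c + E <= C * (1 - th) -> 0 < h <= a -> 0 <= X ->
  X <= C * Rpower (h / a) al - E * (h / a) ->
  Rabs d * X + Rabs c * h <= C * Rpower h al - E * h.
Proof.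
  intros Hal Ha Hd Hsm Hbig HC HE HCth Hh HX0 HX.
  rewrite Rpow_div in HX by lra.
  set (P := Rpower h al) in *. set (Q := Rpower a al) in *.
  assert (HP : 0 < P) by apply Rpow_pos. assert (HQ : 0 < Q) by apply Rpow_pos.
  assert (HhP : h <= P) by (apply Rpow_ge_self; lra).
  set (u := P / Q) in *. set (v := h / a) in *.
  assert (EP : P = u * Q) by (unfold u; field; lra).
  assert (Eh : h = v * a) by (unfold v; field; lra).
  assert (Hu : 0 <= u) by (unfold u; apply Rlt_le, Rdiv_lt_0_compat; lra).
  assert (Hv : 0 <= v) by (unfold v; apply Rlt_le, Rdiv_lt_0_compat; lra).
  pose proof (Rabs_pos d) as Hd0. pose proof (Rabs_pos c) as Hc0.
  destruct (Rle_lt_dec (Rabs d) a) as [Hs|Hb].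
  - specialize (Hsm Hs).
    assert (Rabs d * X <= Rabs d * (C * u)).
    { apply Rmult_le_compat_l; auto. assert (0 <= E * v) by (apply Rmult_le_pos; auto). lra. }
    assert (Rabs d * (C * u) <= th * Q * (C * u)).
    { apply Rmult_le_compat_r; auto. apply Rmult_le_pos; auto. }
    assert (th * Q * (C * u) = th * C * P) by (rewrite EP; ring).
    assert (Rabs c * h + E * h <= (Rabs c + E) * P) by nra.
    assert ((Rabs c + E) * P <= C * (1 - th) * P) by (apply Rmult_le_compat_r; lra).
    nra.
  - specialize (Hbig Hb).
    assert (Hc' : Rabs c * a <= E * (Rabs d - a)).
    { replace (E * (Rabs d - a)) with (E * (Rabs d / a - 1) * a) by (field; lra).
      apply Rmult_le_compat_r; lra. }
    assert (Rabs d * X <= Rabs d * (C * u) - Rabs d * (E * v)).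
    { rewrite <- Rmult_minus_distr_l. apply Rmult_le_compat_l; auto. }
    assert (Rabs d * (C * u) <= Q * (C * u)).
    { apply Rmult_le_compat_r; auto. apply Rmult_le_pos; auto. }
    assert (Rabs c * a * v <= E * (Rabs d - a) * v) by (apply Rmult_le_compat_r; auto).
    rewrite EP, Eh. nra.
Qed.
Lemma leftpt n a c d beta f k :
  (forall k, (1 <= k <= n)%nat -> 0 < a k) -> sum1 n a = 1 ->
  (forall t, 0 <= t <= 1 -> f t = Gop n a c d beta f t) -> cont01 f ->
  (forall k, (1 <= k <= n)%nat -> Rabs (d k) < 1) ->
  (2 <= k <= n)%nat -> f (alph a k) = d k * f 0 + c k * alph a k + beta k.
Proof.
  intros Ha Hs HG Hc Hd Hk.
  set (A := alph a k).
  assert (HA0 : 0 <= A) by (apply (alph_nonneg n); auto; lia).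
  assert (HA1 : A + a k <= 1).
  { unfold A. rewrite <- alph_S by lia. rewrite <- Hs, <- alph_top. apply (alph_le n); auto; lia. }
  assert (Hak : 0 < a k) by (apply Ha; lia).
  assert (Hdk : Rabs (d k) < 1) by (apply Hd; lia).
  set (D := f A - (d k * f 0 + c k * A + beta k)).
  assert (Heps : forall eps, 0 < eps -> Rabs D < 3 * eps).
  { intros eps He.
    destruct (Hc 0 ltac:(lra) eps He) as [d0 [Hd0 H0]].
    destruct (Hc A ltac:(lra) eps He) as [d1 [Hd1 H1]].
    set (e2 := eps / (Rabs (c k) + 1)).
    assert (He2 : 0 < e2) by (unfold e2; apply Rdiv_lt_0_compat; pose proof (Rabs_pos (c k)); lra).
    set (s := Rmin (Rmin (d0 * a k) d1) (Rmin (a k) e2) / 2).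
    assert (Hs1 : s <= d0 * a k / 2) by (unfold s; pose proof (Rmin_l (Rmin (d0 * a k) d1) (Rmin (a k) e2)); pose proof (Rmin_l (d0 * a k) d1); lra).
    assert (Hs2 : s <= d1 / 2) by (unfold s; pose proof (Rmin_l (Rmin (d0 * a k) d1) (Rmin (a k) e2)); pose proof (Rmin_r (d0 * a k) d1); lra).
    assert (Hs3 : s <= a k / 2) by (unfold s; pose proof (Rmin_r (Rmin (d0 * a k) d1) (Rmin (a k) e2)); pose proof (Rmin_l (a k) e2); lra).
    assert (Hs4 : s <= e2 / 2) by (unfold s; pose proof (Rmin_r (Rmin (d0 * a k) d1) (Rmin (a k) e2)); pose proof (Rmin_r (a k) e2); lra).
    assert (Hs0 : 0 < s).
    { unfold s. apply Rdiv_lt_0_compat; [|lra].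
      apply Rmin_glb_lt; apply Rmin_glb_lt; auto. apply Rmult_lt_0_compat; auto. }
    set (t := A + s).
    assert (Ecell : f t = d k * f (Sinv a k t) + c k * t + beta k).
    { apply (cell n a c d beta f k t); auto; try lia. left; change (A < t); unfold t; lra.
      rewrite alph_S by lia. fold A. unfold t; lra. }
    assert (ES : Sinv a k t = s / a k) by (unfold Sinv, t; fold A; field; lra).
    rewrite ES in Ecell.
    assert (Hsa0 : 0 <= s / a k) by (apply Rlt_le, Rdiv_lt_0_compat; lra).
    assert (Hsa1 : s / a k < d0).
    { apply Rmult_lt_reg_r with (a k); auto. replace (s / a k * a k) with s by (field; lra). lra. }
    assert (Hsa2 : s / a k <= 1).
    { apply Rmult_le_reg_r with (a k); auto. replace (s / a k * a k) with s by (field; lra). lra. }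
    specialize (H0 (s / a k) ltac:(lra) ltac:(rewrite Rminus_0_r, Rabs_right; lra)).
    specialize (H1 t ltac:(unfold t; lra) ltac:(unfold t; rewrite Rabs_right; lra)).
    assert (ED : D = (f A - f t) + d k * (f (s / a k) - f 0) + c k * s).
    { unfold D. rewrite Ecell. unfold t. ring. }
    rewrite ED.
    assert (Hcs : Rabs (c k) * s < eps).
    { assert (Rabs (c k) * s <= Rabs (c k) * e2) by (apply Rmult_le_compat_l; [apply Rabs_pos|lra]).
      assert (Rabs (c k) * e2 < eps); [|lra].
      unfold e2. apply Rmult_lt_reg_r with (Rabs (c k) + 1). pose proof (Rabs_pos (c k)); lra.
      replace (Rabs (c k) * (eps / (Rabs (c k) + 1)) * (Rabs (c k) + 1)) with (Rabs (c k) * eps)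
        by (field; pose proof (Rabs_pos (c k)); lra). pose proof (Rabs_pos (c k)); nra. }
    eapply Rle_lt_trans. apply Rabs_triang.
    eapply Rle_lt_trans. apply Rplus_le_compat_r. apply Rabs_triang.
    rewrite !Rabs_mult, (Rabs_right s) by lra.
    rewrite <- Rabs_Ropp, Ropp_minus_distr.
    assert (Rabs (d k) * Rabs (f (s / a k) - f 0) <= 1 * eps).
    { apply Rmult_le_compat; try apply Rabs_pos; lra. }
    lra. }
  assert (D = 0) as HD0.
  { destruct (Req_dec D 0) as [|Hne]; auto.
    assert (Hp : 0 < Rabs D) by (apply Rabs_pos_lt; auto).
    specialize (Heps (Rabs D / 3) ltac:(lra)). lra. }
  unfold D in HD0. lra.
Qed.
Lemma find_cell n a : (forall k, (1 <= k <= n)%nat -> 0 < a k) ->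
  forall m t, (m <= n)%nat -> 0 < t -> t <= alph a (S m) ->
  exists k, (1 <= k <= m)%nat /\ alph a k < t <= alph a (S k).
Proof.
  intros Ha m t. induction m as [|m IH]; intros Hm Ht Ht1.
  - rewrite alph_1 in Ht1. lra.
  - destruct (Rle_lt_dec t (alph a (S m))) as [Hle|Hlt].
    + destruct IH as [k [Hk Hk2]]; try lia; auto. exists k; split; auto; lia.
    + exists (S m). split. lia. split; auto.
Qed.

Lemma abs_comb d u c v : Rabs (d * u + c * v) <= Rabs d * Rabs u + Rabs c * Rabs v.
Proof. eapply Rle_trans. apply Rabs_triang. rewrite !Rabs_mult. lra. Qed.
Lemma div_le1 h a : 0 < h <= a -> 0 < h / a <= 1.
Proof. intros. split. apply Rdiv_lt_0_compat; lra.
  apply (Rmult_le_reg_r a); [lra|]. replace (h / a * a) with h by (field; lra). lra. Qed.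

Lemma div_ge h a r : 0 < a <= r -> 0 < h -> h / r <= h / a.
Proof. intros. unfold Rdiv. apply Rmult_le_compat_l; [lra|]. apply Rinv_le_contravar; lra. Qed.
Theorem theorem2 (n : nat) (a c d beta : nat -> R) (f : R -> R) :
  (2 <= n)%nat ->
  (forall k, (1 <= k <= n)%nat -> 0 < a k) ->
  sum1 n a = 1 ->
  (forall k, (1 <= k <= n)%nat -> Rabs (d k) < 1) ->
  cont01 f ->
  (forall t, 0 <= t <= 1 -> f t = Gop n a c d beta f t) ->
  (exists i, (1 <= i <= n)%nat /\ Rabs (d i) > a i) ->
  forall al : R, 0 < al <= 1 ->
  (forall j, (1 <= j <= n)%nat -> d j <> 0 -> al <= ln (Rabs (d j)) / ln (a j)) ->
  exists C : R, 0 <= C /\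
    forall x y, 0 <= x <= 1 -> 0 <= y <= 1 ->
      Rabs (f x - f y) <= C * Rpower (Rabs (x - y)) al.
Proof.
  intros Hn Ha Hs Hd Hc HG [i [Hi Hdi]] al Hal Hrat.
  assert (Htop : alph a (S n) = 1) by (rewrite alph_top; auto).
  assert (Ha1 : forall k, (1 <= k <= n)%nat -> a k < 1).
  { intros k Hk. destruct (Nat.eq_dec k 1) as [->|Hk1].
    - assert (alph a 2%nat + a 2%nat <= alph a (S n)) by (apply (alph_gap n); auto; lia).
      rewrite alph_S, alph_1 in H by lia. pose proof (Ha 2%nat ltac:(lia)). lra.
    - assert (alph a k + a k <= alph a (S n)) by (apply (alph_gap n); auto; lia).
      assert (alph a 2%nat <= alph a k) by (apply (alph_le n); auto; lia).
      rewrite alph_S, alph_1 in H0 by lia. pose proof (Ha 1%nat ltac:(lia)). lra. }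
  assert (Hlna : forall k, (1 <= k <= n)%nat -> ln (a k) < 0).
  { intros k Hk. rewrite <- ln_1. apply ln_increasing; auto. }
  assert (Hdpow : forall k, (1 <= k <= n)%nat -> Rabs (d k) <= Rpower (a k) al).
  { intros k Hk. destruct (Req_dec (d k) 0) as [->|Hne].
    - rewrite Rabs_R0. left; apply Rpow_pos.
    - specialize (Hrat k Hk Hne). specialize (Hlna k Hk).
      assert (Hdp : 0 < Rabs (d k)) by (apply Rabs_pos_lt; auto).
      assert (al * ln (a k) >= ln (Rabs (d k))).
      { apply Rmult_le_compat_r with (r := - ln (a k)) in Hrat; [|lra].
        replace (ln (Rabs (d k)) / ln (a k) * - ln (a k)) with (- ln (Rabs (d k))) in Hrat by (field; lra).
        lra. }
      unfold Rpower. rewrite <- (exp_ln (Rabs (d k))) at 1 by auto. apply exp_le'. lra. }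
  assert (Hal1 : al < 1).
  { pose proof (Ha i Hi). assert (Hne : d i <> 0).
    { intro E; rewrite E, Rabs_R0 in Hdi; lra. }
    specialize (Hrat i Hi Hne). specialize (Hlna i Hi).
    assert (ln (a i) < ln (Rabs (d i))) by (apply ln_increasing; lra).
    assert (ln (Rabs (d i)) / ln (a i) < 1); [|lra].
    apply (Rmult_lt_reg_r (- ln (a i))); [lra|].
    replace (ln (Rabs (d i)) / ln (a i) * - ln (a i)) with (- ln (Rabs (d i))) by (field; lra). lra. }
  destruct (fin_min_gt n a 0 Ha) as [amin [Hamin0 Hamin]].
  destruct (fin_max_lt n a 1 Ha1) as [r [Hr1 Hr]].
  assert (Hr0 : 0 < r) by (pose proof (Ha 1%nat ltac:(lia)); pose proof (Hr 1%nat ltac:(lia)); lra).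
  destruct (fin_max_lt n (fun k => Rpower (a k) (1 - al)) 1) as [th [Hth1 Hth]].
  { intros k Hk. apply Rpow_lt1. split; auto. lra. }
  destruct (fin_max n (fun k => Rabs (c k))) as [cm Hcm].
  destruct (fin_max n (fun k => if Rlt_dec (a k) (Rabs (d k)) then Rabs (c k) / (Rabs (d k) / a k - 1) else 0)) as [E0 HE0].
  set (E := Rmax E0 0).
  assert (HE : 0 <= E) by apply Rmax_r.
  assert (Hbig : forall k, (1 <= k <= n)%nat -> a k < Rabs (d k) -> Rabs (c k) <= E * (Rabs (d k) / a k - 1)).
  { intros k Hk Hb. specialize (HE0 k Hk). simpl in HE0.
    destruct (Rlt_dec (a k) (Rabs (d k))); [|lra].
    pose proof (Ha k Hk).
    assert (1 < Rabs (d k) / a k).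
    { apply (Rmult_lt_reg_r (a k)); auto. replace (Rabs (d k) / a k * a k) with (Rabs (d k)) by (field; lra). lra. }
    assert (E0 <= E) by apply Rmax_l.
    replace (Rabs (c k)) with (Rabs (c k) / (Rabs (d k) / a k - 1) * (Rabs (d k) / a k - 1)) by (field; lra).
    apply Rmult_le_compat_r; lra. }
  assert (Hsmall : forall k, (1 <= k <= n)%nat -> Rabs (d k) <= a k -> Rabs (d k) <= th * Rpower (a k) al).
  { intros k Hk Hsm. pose proof (Ha k Hk). eapply Rle_trans. apply Hsm.
    rewrite <- (Rpow_1 (a k)) at 1 by auto. replace 1 with ((1 - al) + al) at 1 by ring.
    rewrite Rpow_plus. apply Rmult_le_compat_r. left; apply Rpow_pos. apply (Hth k Hk). }
  destruct (bounded01 f Hc) as [M HM].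
  set (Phi := fun C h => C * Rpower h al - E * h).
  assert (Hkey : forall C, 0 <= C -> cm + E <= C * (1 - th) ->
     forall k, (1 <= k <= n)%nat -> forall h X, 0 < h <= a k -> 0 <= X -> X <= Phi C (h / a k) ->
     Rabs (d k) * X + Rabs (c k) * h <= Phi C h).
  { intros C HC HCth k Hk h X Hh HX0 HX. unfold Phi in *.
    apply (key al (a k) (d k) (c k) th C E h X); auto; try lra.
    all: try (split; [now apply Ha | now apply Ha1]).
    all: try (now apply Hdpow). all: try (now apply Hsmall). all: try (now apply Hbig).
    specialize (Hcm k Hk). simpl in Hcm. lra. }
  assert (Hbase : forall C, 2 * M + E <= C * Rpower amin al -> forall x y h, 0 <= x <= 1 -> 0 <= y <= 1 ->
     amin <= h <= 1 -> Rabs (f x - f y) <= Phi C h).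
  { intros C HC x y h Hx Hy Hh. unfold Phi.
    assert (Rabs (f x - f y) <= 2 * M).
    { unfold Rminus. eapply Rle_trans. apply Rabs_triang. rewrite Rabs_Ropp.
      pose proof (HM x Hx). pose proof (HM y Hy). lra. }
    assert (0 <= C).
    { destruct (Rle_lt_dec 0 C); auto. assert (0 <= M) by (pose proof (HM 0 ltac:(lra)); pose proof (Rabs_pos (f 0)); lra).
      pose proof (Rpow_pos amin al). nra. }
    assert (C * Rpower amin al <= C * Rpower h al).
    { apply Rmult_le_compat_l; auto. apply Rpow_mono; lra. }
    assert (E * h <= E) by nra. lra. }
  set (C1 := Rmax (Rmax ((cm + E) / (1 - th)) ((2 * M + E) / Rpower amin al)) 0).
  assert (HC1_0 : 0 <= C1) by apply Rmax_r.
  assert (HC1_a : (cm + E) / (1 - th) <= C1) by (eapply Rle_trans; [apply Rmax_l|apply Rmax_l]).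
  assert (HC1_b : (2 * M + E) / Rpower amin al <= C1) by (eapply Rle_trans; [apply Rmax_r|apply Rmax_l]).
  assert (HC1th : cm + E <= C1 * (1 - th)).
  { apply Rmult_le_compat_r with (r := 1 - th) in HC1_a; [|lra].
    replace ((cm + E) / (1 - th) * (1 - th)) with (cm + E) in HC1_a by (field; lra). lra. }
  assert (HC1bs : 2 * M + E <= C1 * Rpower amin al).
  { pose proof (Rpow_pos amin al).
    apply Rmult_le_compat_r with (r := Rpower amin al) in HC1_b; [|lra].
    replace ((2 * M + E) / Rpower amin al * Rpower amin al) with (2 * M + E) in HC1_b by (field; lra). lra. }
  assert (Hr01 : 0 < r < 1) by lra.
  assert (Hamr : forall k, (1 <= k <= n)%nat -> amin <= a k <= r).
  { intros k Hk. split; [apply Hamin|apply Hr]; auto. }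
  assert (HA0 : forall h, 0 < h -> h <= 1 -> Rabs (f h - f 0) <= Phi C1 h).
  { apply (scale_ind (fun h => h <= 1 -> Rabs (f h - f 0) <= Phi C1 h) amin r); auto.
    - intros h Hh Hh1. apply Hbase; auto; lra.
    - intros h Hh Hhm IH Hh1.
      pose proof (Hamr 1%nat ltac:(lia)). pose proof (Ha 1%nat ltac:(lia)).
      assert (H2 : alph a 2%nat = a 1%nat) by (rewrite alph_S, alph_1 by lia; ring).
      assert (E1 : f h = d 1%nat * f (h / a 1%nat) + c 1%nat * h + beta 1%nat).
      { rewrite (cell n a c d beta f 1 h); auto; try lia; try lra. all: try (right; split; [reflexivity|lra]).
        unfold Sinv; rewrite alph_1. replace ((h - 0) / a 1%nat) with (h / a 1%nat) by (field; lra). reflexivity. }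
      assert (Ez : f 0 = d 1%nat * f 0 + c 1%nat * 0 + beta 1%nat).
      { rewrite (cell n a c d beta f 1 0) at 1; auto; try lia; try lra. all: try (right; split; [reflexivity|lra]).
        unfold Sinv; rewrite alph_1. replace ((0 - 0) / a 1%nat) with 0 by (field; lra). reflexivity. }
      assert (f h - f 0 = d 1%nat * (f (h / a 1%nat) - f 0) + c 1%nat * h) as -> by nra.
      eapply Rle_trans. apply abs_comb. rewrite (Rabs_right h) by lra.
      apply Hkey; auto; try lia; try lra. apply Rabs_pos.
      pose proof (div_le1 h (a 1%nat) ltac:(lra)).
      apply IH. apply div_ge; lra. lra. }
  assert (Hnn : alph a n + a n = 1) by (rewrite <- alph_S by lia; auto).
  assert (HA1 : forall h, 0 < h -> h <= 1 -> Rabs (f 1 - f (1 - h)) <= Phi C1 h).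
  { apply (scale_ind (fun h => h <= 1 -> Rabs (f 1 - f (1 - h)) <= Phi C1 h) amin r); auto.
    - intros h Hh Hh1. apply Hbase; auto; lra.
    - intros h Hh Hhm IH Hh1.
      pose proof (Hamr n ltac:(lia)). pose proof (Ha n ltac:(lia)).
      assert (E1 : f (1 - h) = d n * f (1 - h / a n) + c n * (1 - h) + beta n).
      { rewrite (cell n a c d beta f n (1 - h)); auto; try lia; try lra.
        unfold Sinv. replace ((1 - h - alph a n) / a n) with (1 - h / a n). reflexivity.
        replace (alph a n) with (1 - a n) by lra. field; lra. }
      assert (Ez : f 1 = d n * f 1 + c n * 1 + beta n).
      { rewrite (cell n a c d beta f n 1) at 1; auto; try lia; try lra.
        unfold Sinv. replace ((1 - alph a n) / a n) with 1. reflexivity.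
        replace (alph a n) with (1 - a n) by lra. field; lra. }
      assert (f 1 - f (1 - h) = d n * (f 1 - f (1 - h / a n)) + c n * h) as -> by nra.
      eapply Rle_trans. apply abs_comb. rewrite (Rabs_right h) by lra.
      apply Hkey; auto; try lia; try lra. apply Rabs_pos.
      pose proof (div_le1 h (a n) ltac:(lra)).
      apply IH. apply div_ge; lra. lra. }
  set (C2 := 2 * C1 + E).
  assert (HC2_0 : 0 <= C2) by (unfold C2; lra).
  assert (HC2th : cm + E <= C2 * (1 - th)) by (unfold C2; nra).
  assert (HC2bs : 2 * M + E <= C2 * Rpower amin al).
  { pose proof (Rpow_pos amin al). unfold C2. nra. }
  assert (HG2 : forall h, 0 < h -> forall x, 0 <= x -> x + h <= 1 -> Rabs (f x - f (x + h)) <= Phi C2 h).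
  { apply (scale_ind (fun h => forall x, 0 <= x -> x + h <= 1 -> Rabs (f x - f (x + h)) <= Phi C2 h) amin r); auto.
    - intros h Hh x Hx0 Hx1. apply Hbase; auto; lra.
    - intros h Hh Hhm IH x Hx0 Hx1.
      destruct (find_cell n a Ha n (x + h) (le_n n) ltac:(lra) ltac:(lra)) as [k [Hk [Hy1 Hy2]]].
      pose proof (Hamr k Hk). pose proof (Ha k Hk).
      assert (HAk : alph a (S k) = alph a k + a k) by (apply alph_S; lia).
      assert (HA0k : 0 <= alph a k) by (apply (alph_nonneg n); auto; lia).
      destruct (Rlt_dec (alph a k) x) as [Hlt|Hge].
      2: destruct (Nat.eq_dec k 1) as [Hk1|Hk1].
      1,2: assert (Hx : alph a k < x \/ (k = 1%nat /\ 0 <= x)) by (first [left; assumption | right; split; assumption]);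
        assert (HAx : alph a k <= x) by (destruct Hx as [Hx|[Hx1' _]]; [lra| subst k; rewrite alph_1; lra]);
        set (x' := (x - alph a k) / a k);
        assert (Ex : f x = d k * f x' + c k * x + beta k) by
          (rewrite (cell n a c d beta f k x); auto; lra);
        assert (Ey : f (x + h) = d k * f (x' + h / a k) + c k * (x + h) + beta k) by
          (rewrite (cell n a c d beta f k (x + h)); auto; try (left; lra); try lra;
           unfold Sinv, x'; replace ((x + h - alph a k) / a k) with ((x - alph a k) / a k + h / a k) by (field; lra); reflexivity);
        assert (f x - f (x + h) = d k * (f x' - f (x' + h / a k)) + c k * (- h)) as -> by nra;
        eapply Rle_trans; [apply abs_comb|]; rewrite Rabs_Ropp, (Rabs_right h) by lra;
        apply Hkey; auto; try lra; [apply Rabs_pos|];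
        pose proof (div_le1 h (a k) ltac:(lra));
        apply IH; [apply div_ge; lra | unfold x'; apply Rmult_le_pos; [lra | left; apply Rinv_0_lt_compat; lra] |
           unfold x'; apply (Rmult_le_reg_r (a k)); [lra|];
           replace (((x - alph a k) / a k + h / a k) * a k) with (x + h - alph a k) by (field; lra); lra].
      assert (HxA : x <= alph a k) by lra.
      destruct k as [|k']; [lia|].
      assert (Hk' : (1 <= k' <= n)%nat) by lia.
      pose proof (Hamr k' Hk'). pose proof (Ha k' Hk').
      assert (HAk' : alph a (S k') = alph a k' + a k') by (apply alph_S; lia).
      set (A := alph a (S k')) in *.
      assert (HP : h <= Rpower h al) by (apply Rpow_ge_self; lra).
      assert (T1 : Rabs (f x - f A) <= C1 * Rpower h al).
      { destruct (Req_dec x A) as [Heq|Hne].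
        - rewrite Heq, Rminus_diag, Rabs_R0. apply Rmult_le_pos; auto. left; apply Rpow_pos.
        - set (s1 := A - x).
          assert (Hs1 : 0 < s1 <= h) by (unfold s1; lra).
          assert (Ex : f x = d k' * f (1 - s1 / a k') + c k' * x + beta k').
          { rewrite (cell n a c d beta f k' x); auto; try (left; lra); try lra.
            unfold Sinv. replace ((x - alph a k') / a k') with (1 - s1 / a k'). reflexivity.
            unfold s1. rewrite HAk'. field; lra. }
          assert (EA : f A = d k' * f 1 + c k' * A + beta k').
          { rewrite (cell n a c d beta f k' A); auto; try (left; lra); try lra; try apply Rle_refl.
            unfold Sinv. replace ((A - alph a k') / a k') with 1. reflexivity.
            rewrite HAk'. field; lra. }
          assert (f x - f A = d k' * (f 1 - f (1 - s1 / a k')) * (-1) + c k' * (- s1)) as -> by (rewrite Ex, EA; unfold s1; ring).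
          eapply Rle_trans. apply Rabs_triang. rewrite !Rabs_mult. replace (Rabs (-1)) with 1 by (rewrite Rabs_left; lra). rewrite Rabs_Ropp, (Rabs_right s1) by lra.
          rewrite Rmult_1_r.
          pose proof (div_le1 s1 (a k') ltac:(lra)).
          eapply Rle_trans. apply (Hkey C1); auto; try lra. apply Rabs_pos. apply HA1; lra.
          unfold Phi. assert (C1 * Rpower s1 al <= C1 * Rpower h al).
          { apply Rmult_le_compat_l; auto. apply Rpow_mono; lra. }
          assert (0 <= E * s1) by nra. lra. }
      assert (T2 : Rabs (f A - f (x + h)) <= C1 * Rpower h al).
      { set (s2 := x + h - A).
        assert (Hs2 : 0 < s2 <= h) by (unfold s2; lra).
        assert (EA : f A = d (S k') * f 0 + c (S k') * A + beta (S k')).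
        { unfold A. apply (leftpt n a c d beta f (S k')); auto. lia. }
        assert (Ey : f (x + h) = d (S k') * f (s2 / a (S k')) + c (S k') * (x + h) + beta (S k')).
        { rewrite (cell n a c d beta f (S k') (x + h)); auto; try (left; lra); try lra. }
        assert (f A - f (x + h) = d (S k') * (f (s2 / a (S k')) - f 0) * (-1) + c (S k') * (- s2)) as -> by (rewrite Ey, EA; unfold s2; ring).
        eapply Rle_trans. apply Rabs_triang. rewrite !Rabs_mult. replace (Rabs (-1)) with 1 by (rewrite Rabs_left; lra). rewrite Rabs_Ropp, (Rabs_right s2) by lra.
        rewrite Rmult_1_r.
        pose proof (div_le1 s2 (a (S k')) ltac:(lra)).
        eapply Rle_trans. apply (Hkey C1); auto; try lra. apply Rabs_pos. apply HA0; lra.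
        unfold Phi. assert (C1 * Rpower s2 al <= C1 * Rpower h al).
        { apply Rmult_le_compat_l; auto. apply Rpow_mono; lra. }
        assert (0 <= E * s2) by nra. lra. }
      replace (f x - f (x + h)) with ((f x - f A) + (f A - f (x + h))) by ring.
      eapply Rle_trans. apply Rabs_triang. unfold Phi, C2.
      assert (E * h <= E * Rpower h al) by (apply Rmult_le_compat_l; auto).
      lra. }
  exists C2. split; auto.
  assert (Hfin : forall x y, 0 <= x -> x < y -> y <= 1 -> Rabs (f x - f y) <= C2 * Rpower (y - x) al).
  { intros x y Hx Hxy Hy. replace y with (x + (y - x)) at 1 by ring.
    eapply Rle_trans. apply HG2; lra. unfold Phi. assert (0 <= E * (y - x)) by nra. lra. }
  intros x y Hx Hy.
  destruct (Rtotal_order x y) as [Hlt|[Heq|Hgt]].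
  - rewrite (Rabs_left (x - y)) by lra. replace (- (x - y)) with (y - x) by ring. apply Hfin; lra.
  - subst. rewrite Rminus_diag, Rabs_R0. apply Rmult_le_pos; auto. left; apply Rpow_pos.
  - rewrite Rabs_minus_sym, (Rabs_right (x - y)) by lra. apply Hfin; lra.
Qed.
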